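(* Let $I$ be an ideal in a Noetherian ring $A$ containing a regular element (non-zero-divisor) of $A$, and let $\tilde{I}=\bigcup_{n\ge0}(I^{n+1}:I^n)$ be the Ratliff–Rush ideal associated with $I$. Then $\tilde{I}\subset{}^*I$.
   Context: For an ideal $I$ of $A$, an element $b\in A$ is weakly subintegral over $I$ if there exist $q\in\mathbb{N}$ and elements $a_i\in I^i$ ($1\le i\le 2q+1$) such that $b^n+\sum_{i=1}^n\binom{n}{i}a_ib^{n-i}=0$ for all $n$ with $q+1\le n\le 2q+1$. The weak subintegral closure ${}^*I$ of $I$ is the set of elements of $A$ weakly subintegral over $I$. *)

(* Defs.v *)
From HB Require Import structures.
From mathcomp Require Import all_boot all_order all_algebra.
Set Implicit Arguments. Unset Strict Implicit. Unset Printing Implicit Defensive.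
Import Order.TTheory GRing.Theory Num.Theory.
Local Open Scope ring_scope.

Section CommAlg.
Variable A : comNzRingType.

Definition is_ideal (I : A -> Prop) : Prop :=
  [/\ I 0, (forall x y, I x -> I y -> I (x + y)) & (forall r x, I x -> I (r * x))].

Definition ideal_mul (J K : A -> Prop) : A -> Prop :=
  fun x => exists s : seq (A * A),
    (forall p, p \in s -> J p.1 /\ K p.2) /\ x = \sum_(p <- s) p.1 * p.2.

Fixpoint ideal_pow (I : A -> Prop) (n : nat) : A -> Prop :=
  match n with
  | 0 => fun _ => True
  | n'.+1 => ideal_mul (ideal_pow I n') I
  end.

Definition colon (J K : A -> Prop) : A -> Prop :=
  fun x => forall y, K y -> J (x * y).

Definition ratliff_rush (I : A -> Prop) : A -> Prop :=
  fun x => exists n : nat, colon (ideal_pow I n.+1) (ideal_pow I n) x.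

Definition weakly_subintegral (I : A -> Prop) (b : A) : Prop :=
  exists (q : nat) (a : nat -> A),
    (forall i, (1 <= i <= 2 * q + 1)%N -> ideal_pow I i (a i)) /\
    (forall n, (q + 1 <= n <= 2 * q + 1)%N ->
       b ^+ n + \sum_(1 <= i < n.+1) ('C(n, i))%:R * a i * b ^+ (n - i) = 0).

Definition weak_subintegral_closure (I : A -> Prop) : A -> Prop :=
  fun b => weakly_subintegral I b.

Definition regular (r : A) : Prop := forall x : A, r * x = 0 -> x = 0.

Definition noetherian : Prop :=
  forall J : nat -> A -> Prop,
    (forall n, is_ideal (J n)) ->
    (forall n x, J n x -> J n.+1 x) ->
    exists N, forall m, (N <= m)%N -> forall x, J m x -> J N x.

End CommAlg.

(* Main.v *)
Require Import Defs.
From HB Require Import structures.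
From mathcomp Require Import all_boot all_order all_algebra ring.
Set Implicit Arguments. Unset Strict Implicit. Unset Printing Implicit Defensive.
From Stdlib Require Import Classical ClassicalEpsilon.
Import GRing.Theory.
Local Open Scope ring_scope.

Section Pow.
Variable A : comNzRingType.

Lemma ideal_sum (J : A -> Prop) (T : Type) (r : seq T) (P : pred T) (F : T -> A) :
  is_ideal J -> (forall i, P i -> J (F i)) -> J (\sum_(i <- r | P i) F i).
Proof. case=> J0 JD JM HF; exact: (big_ind J). Qed.

Lemma ideal_mulr (J : A -> Prop) x y : is_ideal J -> J x -> J (x * y).
Proof. by case=> _ _ JM Hx; rewrite mulrC; apply: JM. Qed.

Lemma ideal_opp (J : A -> Prop) x : is_ideal J -> J x -> J (- x).
Proof. by case=> _ _ JM Hx; rewrite -mulN1r; apply: JM. Qed.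

Lemma mul_ideal (J K : A -> Prop) : is_ideal J -> is_ideal (ideal_mul J K).
Proof.
case=> J0 JD JM; split.
- by exists [::]; split => //; rewrite big_nil.
- move=> x y [s [Hs ->]] [t [Ht ->]]; exists (s ++ t); split; last by rewrite big_cat.
  by move=> p; rewrite mem_cat => /orP [/Hs|/Ht].
- move=> r x [s [Hs ->]]; exists [seq (r * p.1, p.2) | p <- s]; split.
  + move=> p /mapP [q /Hs [H1 H2] ->] /=; split => //; exact: JM.
  + by rewrite big_map mulr_sumr; apply: eq_bigr => p _; rewrite mulrA.
Qed.

Variable I : A -> Prop.
Hypothesis HI : is_ideal I.

Lemma pow_ideal n : is_ideal (ideal_pow I n).
Proof. elim: n => [|n IH] /=; [by split | exact: mul_ideal]. Qed.

Lemma pow1 z : I z -> ideal_pow I 1 z.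
Proof.
move=> Hz; exists [:: (1, z)]; split; last by rewrite big_seq1 mul1r.
by move=> p; rewrite inE => /eqP ->.
Qed.

Lemma pow_mul a b y z : ideal_pow I a y -> ideal_pow I b z -> ideal_pow I (a + b) (y * z).
Proof.
move=> Hy; elim: b z => [|b IH] z Hz.
  by rewrite addn0; apply: ideal_mulr => //; exact: pow_ideal.
case: Hz => s [Hs ->]; rewrite addnS /=.
exists [seq (y * p.1, p.2) | p <- s]; split.
- by move=> p /mapP [q /Hs [H1 H2] ->] /=; split => //; exact: IH.
- by rewrite big_map mulr_sumr; apply: eq_bigr => p _; rewrite mulrA.
Qed.

Lemma powS_sub n z : ideal_pow I n.+1 z -> ideal_pow I n z.
Proof.
case=> s [Hs ->]; rewrite big_seq; apply: ideal_sum; first exact: pow_ideal.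
by move=> p /Hs [H1 _]; apply: ideal_mulr => //; exact: pow_ideal.
Qed.

Lemma pow_le m n z : (m <= n)%N -> ideal_pow I n z -> ideal_pow I m z.
Proof.
move=> /subnKC <-; elim: (n - m)%N => [|k IH]; first by rewrite addn0.
by rewrite addnS => /powS_sub.
Qed.
End Pow.

Section Gen.
Variable A : comNzRingType.

Definition gen (l : seq A) (z : A) : Prop :=
  exists c : nat -> A, z = \sum_(i < size l) c i * l`_i.

Lemma gen_ideal l : is_ideal (gen l).
Proof.
split.
- by exists (fun _ => 0); rewrite big1 // => i _; rewrite mul0r.
- move=> x y [c ->] [d ->]; exists (fun i => c i + d i).
  by rewrite -big_split; apply: eq_bigr => i _; rewrite mulrDl.
- move=> r x [c ->]; exists (fun i => r * c i).
  by rewrite mulr_sumr; apply: eq_bigr => i _; rewrite mulrA.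
Qed.

Lemma gen_mem l z : z \in l -> gen l z.
Proof.
move=> Hz; have Hi : (index z l < size l)%N by rewrite index_mem.
exists (fun i => if i == index z l then 1 else 0).
rewrite (bigD1 (Ordinal Hi)) //= eqxx mul1r nth_index //.
rewrite big1 ?addr0 // => i /negbTE; rewrite -val_eqE /= => ->; exact: mul0r.
Qed.

Lemma gen_cons a l z : gen l z -> gen (a :: l) z.
Proof.
case=> c ->; exists (fun i => if i is i'.+1 then c i' else 0).
by rewrite /= big_ord_recl /= mul0r add0r.
Qed.

Lemma gen_sub (J : A -> Prop) l z : is_ideal J -> (forall g, g \in l -> J g) -> gen l z -> J z.
Proof.
move=> HJ Hl [c ->]; apply: ideal_sum => // i _.
case: HJ => _ _ JM; apply: JM; apply: Hl; exact: mem_nth.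
Qed.
End Gen.

Section FG.
Variable A : comNzRingType.

Lemma noeth_fg (J : A -> Prop) : noetherian A -> is_ideal J ->
  exists l : seq A, (forall g, g \in l -> J g) /\ forall z, J z -> gen l z.
Proof.
move=> HN HJ; apply: NNPP => H.
have Hex : forall l : seq A, exists z, (forall g, g \in l -> J g) -> J z /\ ~ gen l z.
  move=> l; case: (classic (forall g, g \in l -> J g)) => Hl; last first.
    by exists 0 => /Hl.
  have : ~ (forall z, J z -> gen l z) by move=> Hz; apply: H; exists l.
  move=> /not_all_ex_not [z Hz]; exists z => _.
  by apply: NNPP => Hc; apply: Hz => Jz; apply: NNPP => Hg; apply: Hc.
pose next l := proj1_sig (constructive_indefinite_description _ (Hex l)).
have Hnext l : (forall g, g \in l -> J g) -> J (next l) /\ ~ gen l (next l).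
  exact: (proj2_sig (constructive_indefinite_description _ (Hex l))).
pose L n := iter n (fun l => next l :: l) [::].
have HL n : forall g, g \in L n -> J g.
  elim: n => [|n IH] g //=; rewrite inE => /orP [/eqP ->|]; last exact: IH.
  by have [] := Hnext _ IH.
have [N HNn] := HN (fun n => gen (L n)) (fun n => gen_ideal (L n))
  (fun n x Hx => gen_cons (next (L n)) Hx).
have := HNn N.+1 (leqnSn N) (next (L N)) (gen_mem (mem_head _ _)).
by have [] := Hnext _ (HL N).
Qed.
End FG.

Section Rees.
Variable A : comNzRingType.
Variable I : A -> Prop.
Hypothesis HI : is_ideal I.

Definition RI (p : {poly A}) := forall k, ideal_pow I k p`_k.

Lemma pow0 k : ideal_pow I k 0.
Proof. by case: ((pow_ideal I) k). Qed.

Lemma RI0 : RI 0. Proof. by move=> k; rewrite coef0; exact: pow0. Qed.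
Lemma RI1 : RI 1.
Proof. by move=> [|k]; rewrite coef1 //= mulr0n; exact: (pow0 k.+1). Qed.
Lemma RID p q : RI p -> RI q -> RI (p + q).
Proof. by move=> Hp Hq k; rewrite coefD; case: ((pow_ideal I) k) => _ D _; apply: D. Qed.
Lemma RIN p : RI p -> RI (- p).
Proof. by move=> Hp k; rewrite coefN; apply: ideal_opp => //; exact: pow_ideal. Qed.
Lemma RIsum (T : Type) (r : seq T) (P : pred T) (F : T -> {poly A}) :
  (forall i, P i -> RI (F i)) -> RI (\sum_(i <- r | P i) F i).
Proof. by move=> H; apply: (big_ind RI) => //; [exact: RI0 | exact: RID]. Qed.
Lemma RIM p q : RI p -> RI q -> RI (p * q).
Proof.
move=> Hp Hq k; rewrite coefM; apply: ideal_sum; first exact: pow_ideal.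
move=> i _; rewrite -{1}(subnKC (ltnSE (ltn_ord i))); exact: pow_mul.
Qed.
Lemma RICX c : I c -> RI (c%:P * 'X).
Proof.
move=> Hc [|[|k]]; rewrite coefCM coefX ?mulr0 ?mulr1 //.
  exact: (pow1 Hc).
exact: (pow0 k.+2).
Qed.

Definition RQ (P : {poly {poly A}}) := forall j, RI P`_j.
Lemma RQ0 : RQ 0. Proof. by move=> j; rewrite coef0; exact: RI0. Qed.
Lemma RQ1 : RQ 1.
Proof. by move=> [|j]; rewrite coef1 /=; [exact: RI1 | exact: RI0]. Qed.
Lemma RQD p q : RQ p -> RQ q -> RQ (p + q).
Proof. by move=> Hp Hq k; rewrite coefD; apply: RID. Qed.
Lemma RQN p : RQ p -> RQ (- p).
Proof. by move=> Hp k; rewrite coefN; apply: RIN. Qed.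
Lemma RQM p q : RQ p -> RQ q -> RQ (p * q).
Proof.
move=> Hp Hq k; rewrite coefM; apply: RIsum => i _; exact: RIM.
Qed.
Lemma RQX : RQ 'X.
Proof. by move=> [|[|j]]; rewrite coefX /=; [exact: RI0 | exact: RI1 | exact: RI0]. Qed.
Lemma RQC p : RI p -> RQ p%:P.
Proof. by move=> Hp [|j]; rewrite coefC /=; [exact: Hp | exact: RI0]. Qed.
Lemma RQexp p n : RQ p -> RQ (p ^+ n).
Proof. by move=> Hp; elim: n => [|n IH]; [rewrite expr0; exact: RQ1 | rewrite exprS; exact: RQM]. Qed.
Lemma RQsum (T : Type) (r : seq T) (P : pred T) (F : T -> {poly {poly A}}) :
  (forall i, P i -> RQ (F i)) -> RQ (\sum_(i <- r | P i) F i).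
Proof. by move=> H; apply: (big_ind RQ) => //; [exact: RQ0 | exact: RQD]. Qed.
Lemma RQprod (T : Type) (r : seq T) (P : pred T) (F : T -> {poly {poly A}}) :
  (forall i, P i -> RQ (F i)) -> RQ (\prod_(i <- r | P i) F i).
Proof. by move=> H; apply: (big_ind RQ) => //; [exact: RQ1 | exact: RQM]. Qed.

Lemma RQdet n (M : 'M[{poly {poly A}}]_n) : (forall i j, RQ (M i j)) -> RQ (\det M).
Proof.
move=> HM; rewrite /determinant; apply: RQsum => s _; apply: RQM.
  apply: RQexp; apply: RQN; exact: RQ1.
by apply: RQprod => i _; apply: HM.
Qed.

Lemma RQ_char n (M : 'M[{poly A}]_n) : (forall i j, RI (M i j)) -> RQ (char_poly M).
Proof.
move=> HM; apply: RQdet => i j; rewrite !mxE; apply: RQD; last by apply: RQN; apply: RQC.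
by case: (i == j); [rewrite mulr1n; exact: RQX | rewrite mulr0n; exact: RQ0].
Qed.
End Rees.


Lemma horner_mx_vec (R : comNzRingType) n' (M : 'M[R]_n'.+1) (G : 'cV[R]_n'.+1) y :
  M *m G = y *: G -> forall p, horner_mx M p *m G = p.[y] *: G.
Proof.
move=> HM; elim/poly_ind => [|p c IH].
  by rewrite rmorph0 mul0mx horner0 scale0r.
rewrite rmorphD rmorphM /= horner_mx_X horner_mx_C hornerMXaddC.
rewrite mulmxDl -mulmxA HM mul_scalar_mx -scalemxAr IH scalerA scalerDl.
by rewrite [y * _]mulrC.
Qed.

Section Integral.
Variable A : comNzRingType.
Variable I : A -> Prop.
Hypothesis HI : is_ideal I.
Variable N : nat.
Variable g : seq A.
Hypothesis Hg : forall z, ideal_pow I N z -> gen g z.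
Hypothesis Hgin : forall z, z \in g -> ideal_pow I N z.

Lemma lin_comb s : (forall p, p \in s -> ideal_pow I N p.1 /\ I p.2) ->
  exists c : nat -> A, (forall l, I (c l)) /\
    \sum_(p <- s) p.1 * p.2 = \sum_(l < size g) c l * g`_l.
Proof.
elim: s => [|p s IH] Hs.
  exists (fun _ => 0); split; first by case: HI.
  by rewrite big_nil big1 // => l _; rewrite mul0r.
have [|c [Hc Hsum]] := IH; first by move=> q Hq; apply: Hs; rewrite inE Hq orbT.
have [H1 H2] := Hs p (mem_head _ _).
have [d Hd] := Hg H1.
exists (fun l => d l * p.2 + c l); split.
  by move=> l; case: HI => _ D M; apply: D => //; apply: M.
rewrite big_cons Hsum Hd mulr_suml -big_split; apply: eq_bigr => l _ /=.
by rewrite mulrDl mulrAC.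
Qed.

Variable x : A.
Hypothesis HxN : forall y, ideal_pow I N y -> ideal_pow I N.+1 (x * y).
Variable r0 : A.
Hypothesis Hr0 : regular r0.
Hypothesis HrN : ideal_pow I N r0.

Lemma integral_eq : exists n (f : nat -> A),
  (forall j, (j < n)%N -> ideal_pow I (n - j) (f j)) /\
  x ^+ n + \sum_(j < n) f j * x ^+ j = 0.
Proof.
have [d Hd] := Hg HrN.
case Hn: (size g) Hd => [|n'] Hd.
  exfalso; move: Hd; rewrite big_ord0 => Hd.
  have H1 : (1:A) = 0 by apply: Hr0; rewrite Hd mul0r.
  by move/eqP: H1; rewrite oner_eq0.
have Hc : forall j : 'I_n'.+1, exists c : nat -> A, (forall l, I (c l)) /\
    x * g`_j = \sum_(l < n'.+1) c l * g`_l.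
  move=> j; have Hj : (j < size g)%N by rewrite Hn.
  have [s [Hs ->]] := HxN (Hgin (mem_nth 0 Hj)).
  by have := lin_comb Hs; rewrite Hn.
have [cf Hcf] := fin_all_exists Hc.
pose M : 'M[{poly A}]_n'.+1 := \matrix_(j, l) ((cf j l)%:P * 'X).
pose G : 'cV[{poly A}]_n'.+1 := \col_j (g`_j)%:P.
pose y : {poly A} := x%:P * 'X.
have HMG : M *m G = y *: G.
  apply/matrixP => j k; rewrite !mxE.
  have [_ Hj] := Hcf j.
  have -> : y * (g`_j)%:P = 'X * (x * g`_j)%:P by rewrite polyCM /y; ring.
  rewrite Hj rmorph_sum mulr_sumr; apply: eq_bigr => l _; rewrite !mxE rmorphM /=; ring.
have HP := horner_mx_vec HMG (char_poly M).
rewrite Cayley_Hamilton mul0mx in HP.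
set P := char_poly M in HP.
have HPg : forall j : 'I_n'.+1, P.[y] * (g`_j)%:P = 0.
  by move=> j; move/matrixP: HP => /(_ j 0); rewrite !mxE => <-.
have HPy : P.[y] = 0.
  have H0 : P.[y] * r0%:P = 0.
    rewrite Hd rmorph_sum mulr_sumr big1 // => j _.
    by rewrite rmorphM /= mulrCA HPg mulr0.
  apply/polyP => k; move/polyP: H0 => /(_ k); rewrite coefMC coef0 => Hk.
  by rewrite ?coef0; apply: Hr0; rewrite mulrC.
have HRQ : RQ I P.
  apply: RQ_char => j l; rewrite mxE; apply: RICX; by have [] := Hcf j.
exists n'.+1, (fun j => (P`_j)`_(n'.+1 - j)); split.
  by move=> j _; apply: HRQ.
move/polyP: HPy => /(_ n'.+1).
rewrite horner_coef size_char_poly coef0 coef_sum big_ord_recr /=.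
have -> : P`_n'.+1 = 1.
  by have := char_poly_monic M; rewrite monicE lead_coefE size_char_poly => /eqP.
rewrite /y exprMn mul1r coefMXn ltnn subnn -rmorphXn coefC /=.
move=> H; apply: etrans H; rewrite addrC; congr (_ + _); apply: eq_bigr => i _.
rewrite exprMn mulrA coefMXn ltnNge (ltnW (ltn_ord i)) /= -rmorphXn coefMC.
done.
Qed.
End Integral.

From mathcomp Require Import zify.

Lemma tri (A : comNzRingType) (q m : nat) : exists r : nat -> A,
  (forall i, (i <= q)%N -> r i = 0) /\
  forall n, (q < n <= m)%N -> 1 + \sum_(1 <= i < n.+1) ('C(n, i))%:R * r i = 0.
Proof.
elim: m => [|m [r [Hr0 Hr]]].
  by exists (fun _ => 0); split => // n /andP [H1 H2]; lia.
case: (ltnP q m.+1) => Hqm; last first.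
  by exists r; split => // n /andP [H1 H2]; lia.
pose S := 1 + \sum_(1 <= i < m.+2) ('C(m.+1, i))%:R * r i.
exists (fun i => if i == m.+1 then r i - S else r i); split.
  move=> i Hi; case: eqP => [Heq|_]; last exact: Hr0.
  by exfalso; lia.
move=> n /andP [H1 H2].
case: (ltnP n m.+1) => Hnm.
  have Hn : (q < n <= m)%N by apply/andP; split => //; lia.
  apply: etrans (Hr n Hn); congr (_ + _); apply: eq_big_nat => i /andP [Hi1 Hi2].
  by case: eqP => // Heq; exfalso; lia.
have -> : n = m.+1 by lia.
rewrite big_nat_recr //= eqxx binn mul1r.
rewrite (@eq_big_nat _ _ _ 1 m.+1 _ (fun i => ('C(m.+1, i))%:R * r i)); last first.
  by move=> i /andP [Hi1 Hi2]; case: eqP => // Heq; exfalso; lia.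
have HS : S = 1 + \sum_(1 <= i < m.+1) ('C(m.+1, i))%:R * r i + r m.+1.
  by rewrite /S big_nat_recr //= binn mul1r addrA.
rewrite HS; ring.
Qed.

Section Powers.
Variable A : comNzRingType.
Variable I : A -> Prop.
Hypothesis HI : is_ideal I.
Variable N : nat.
Variable x : A.
Hypothesis HxN : forall y, ideal_pow I N y -> ideal_pow I N.+1 (x * y).

Lemma HxNm m y : (N <= m)%N -> ideal_pow I m y -> ideal_pow I m.+1 (x * y).
Proof.
move=> /subnKC <-; elim: (m - N)%N y => [|t IH] y; first by rewrite addn0; exact: HxN.
rewrite addnS => -[s [Hs ->]].
exists [seq (x * p.1, p.2) | p <- s]; split.
- by move=> p /mapP [q /Hs [H1 H2] ->] /=; split => //; exact: IH.
- by rewrite big_map mulr_sumr; apply: eq_bigr => p _; rewrite mulrA.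
Qed.

Lemma xpow_mul j m y : (N <= m)%N -> ideal_pow I m y -> ideal_pow I (m + j) (x ^+ j * y).
Proof.
move=> Hm Hy; elim: j => [|j IH]; first by rewrite addn0 expr0 mul1r.
rewrite exprS -mulrA addnS; apply: HxNm => //; lia.
Qed.

Variable n' : nat.
Variable f : nat -> A.
Hypothesis Hf : forall j, (j < n'.+1)%N -> ideal_pow I (n'.+1 - j) (f j).
Hypothesis Heq : x ^+ n'.+1 + \sum_(j < n'.+1) f j * x ^+ j = 0.

Lemma xpow_red t : exists c : nat -> A,
  (forall j, (j < n'.+1)%N -> ideal_pow I (n' + t - j) (c j)) /\
  x ^+ (n' + t) = \sum_(j < n'.+1) c j * x ^+ j.
Proof.
elim: t => [|t [c [Hc Hx]]].
  exists (fun j => if j == n' then 1 else 0); split.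
    move=> j Hj; case: eqP => [->|_]; last exact: pow0.
    by rewrite addn0 subnn.
  rewrite big_ord_recr /= eqxx mul1r addn0 big1 ?add0r // => i _.
  by rewrite (ltn_eqF (ltn_ord i)) mul0r.
exists (fun j => (if j is j'.+1 then c j' else 0) - c n' * f j); split.
  move=> j Hj; case: (pow_ideal I (n' + t.+1 - j)) => _ D _.
  apply: D; last first.
    apply: ideal_opp; first exact: pow_ideal.
    have H := pow_mul (Hc n' (ltnSn n')) (Hf Hj).
    by have -> : (n' + t.+1 - j = n' + t - n' + (n'.+1 - j))%N by lia.
  case: j Hj => [|j] Hj; first exact: pow0.
  have -> : (n' + t.+1 - j.+1 = n' + t - j)%N by lia.
  apply: Hc; lia.
have Hxn : x ^+ n'.+1 = - \sum_(j < n'.+1) f j * x ^+ j.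
  by apply/eqP; rewrite -addr_eq0 Heq.
rewrite addnS exprS Hx mulr_sumr big_ord_recr /= mulrCA -exprS Hxn.
under [RHS]eq_bigr => i _ do rewrite mulrBl -mulrA.
rewrite sumrB [X in _ = X - _]big_ord_recl /= mul0r add0r -mulr_sumr mulrN; congr (_ - _).
  by rewrite mulr_sumr; apply: eq_bigr => i _; rewrite /bump /= add0n exprS mulrCA.
by rewrite mulr_sumr.
Qed.

Lemma xpow_in k : (N + n'.+1 <= k)%N -> ideal_pow I k (x ^+ k).
Proof.
move=> Hk; have [c [Hc Hx]] := xpow_red (k - n').
have Hkk : (n' + (k - n') = k)%N by lia.
rewrite Hkk in Hc Hx; rewrite Hx; apply: ideal_sum; first exact: pow_ideal.
move=> j _; rewrite mulrC; have Hj := ltn_ord j.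
have E : k = ((k - j) + j)%N by lia.
rewrite {1}E; apply: xpow_mul; first by lia.
exact: Hc.
Qed.
End Powers.

Unset Implicit Arguments.

Theorem mainTheorem11 (A : comNzRingType) (I : A -> Prop) :
  noetherian A -> is_ideal I -> (exists r, I r /\ regular r) ->
  forall x : A, ratliff_rush I x -> weak_subintegral_closure I x.
Proof.
move=> HN HI [r [Ir Rr]] x [N HxN].
have HrN : ideal_pow I N (r ^+ N).
  elim: N {HxN} => [|N IH]; first by [].
  by rewrite exprSr -addn1; apply: pow_mul => //; exact: pow1.
have Rreg : regular (r ^+ N).
  elim: N {HxN HrN} => [|N IH] y; first by rewrite expr0 mul1r.
  by rewrite exprS -mulrA => /Rr /IH.
have [g [Hgin Hg]] := noeth_fg HN (pow_ideal I N).
have [[|n'] [f [Hf Heq]]] := integral_eq HI Hg Hgin HxN Rreg HrN.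
  exfalso; move: Heq; rewrite expr0 big_ord0 addr0 => /eqP; by rewrite oner_eq0.
set K := (N + n'.+1)%N.
have HxK : forall k, (K <= k)%N -> ideal_pow I k (x ^+ k).
  by move=> k Hk; apply: (xpow_in HxN Hf Heq).
have [rr [Hr0 Hr]] := tri A K (2 * K + 1).
exists K, (fun i => rr i * x ^+ i); split.
  move=> i /andP [Hi1 Hi2]; case: (leqP i K) => HiK.
    by rewrite Hr0 // mul0r; exact: pow0.
  by case: (pow_ideal I i) => _ _ M; apply: M; apply: HxK; apply: ltnW.
move=> m /andP [H1 H2].
have Hm : (K < m <= 2 * K + 1)%N by rewrite -addn1 H1 H2.
rewrite (@eq_big_nat _ _ _ 1 m.+1 _ (fun i => ('C(m, i))%:R * rr i * x ^+ m)); last first.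
  move=> i /andP [_ Hi]; rewrite -!mulrA; congr (_ * (_ * _)).
  by rewrite -exprD subnKC.
by rewrite -mulr_suml -{1}[x ^+ m]mul1r -mulrDl (Hr m Hm) mul0r.
Qed.
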